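(* If all the ai-cycles in an atomic flow B are fragile cycles, then there exists a cycle-free atomic flow C such that B →_bc C.
   Context: Atomic flows are finite directed acyclic graphs whose vertices are labelled interaction (no upper edges, two lower edges), cointeraction or cut (two upper edges, no lower edges), weakening (one lower edge), coweakening (one upper edge), contraction (two upper edges, one lower edge) or cocontraction (one upper edge, two lower edges), together with dangling upper edges (coming from the top) and lower edges (going to the bottom), and which admit a polarity assignment (edges of a (co)contraction vertex share a polarity, the two edges of a (co)interaction vertex have opposite polarities). A path is a sequence of consecutive edges going only downwards (or its reverse). An ai-path is a concatenation of paths joined at interaction or cointeraction vertices (consecutive edges distinct). An ai-connection is a path from an interaction vertex to a cointeraction vertex or vice versa; a simple edge is an ai-connection consisting of a single edge. An ai-cycle is an ai-path from a vertex to itself in which no edge appears twice (up to cyclic permutation and inversion); a fragile cycle is an ai-cycle containing a simple edge; a flow is cycle-free if it has no ai-cycles. The reduction →_bc (''break ai-cycles'') is defined inductively. Base case: if B has no fragile cycles, then B →_bc B. Inductive case: suppose B consists of a flow A with upper edges ε_1,…,ε_h and an additional upper edge 2, lower edges ε'_1,…,ε'_k and an additional lower edge 3, together with an interaction vertex whose two lower edges are 2 and 1, and a cointeraction vertex whose two upper edges are 3 and 1 (so 1 is a simple edge). Let B' be a copy Ã of A (edges renamed with tildes) in which the edge 2̃ is the lower edge of a new weakening vertex, and B'' a copy Â of A (edges renamed with hats) in which the edge 3̂ is the upper edge of a new coweakening vertex. If edge 1 belongs to an ai-cycle, B' →_bc D' and B'' →_bc D'', then B →_bc C, where C is formed from D'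 and D'' by identifying the lower edge 3̃ of D' with the upper edge 2̂ of D'', by attaching, for each i, a cocontraction vertex with upper edge ε_i and lower edges ε̃_i (into D') and ε̂_i (into D''), and, for each j, a contraction vertex with upper edges ε̃'_j (from D') and ε̂'_j (from D'') and lower edge ε'_j. *)

(* Defs.v *)
From HB Require Import structures.
From mathcomp Require Import all_boot.
Unset Implicit Arguments. Unset Strict Implicit. Unset Printing Implicit Defensive.

(* Vertex labels: interaction, cointeraction (cut), weakening, coweakening,
   contraction, cocontraction. *)
Inductive vkind := Int | Cut | Wk | Cowk | Ctr | Coctr.

Definition vkind_eqb (a b : vkind) : bool :=
  match a, b with
  | Int, Int | Cut, Cut | Wk, Wk | Cowk, Cowk | Ctr, Ctr | Coctr, Coctr => true
  | _, _ => false end.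
Lemma vkind_eqP : Equality.axiom vkind_eqb.
Proof. by case; case; constructor. Qed.
HB.instance Definition _ := hasDecEq.Build vkind vkind_eqP.

(* number of upper / lower edges of a vertex of a given kind *)
Definition nup (k : vkind) : nat :=
  match k with Int => 0 | Cut => 2 | Wk => 0 | Cowk => 1 | Ctr => 2 | Coctr => 1 end.
Definition nlow (k : vkind) : nat :=
  match k with Int => 2 | Cut => 0 | Wk => 1 | Cowk => 0 | Ctr => 1 | Coctr => 2 end.

(* Each edge has an upper end [fsrc] (None = dangling upper edge, coming from
   the top) and a lower end [ftgt] (None = dangling lower edge, going to the
   bottom).  Edges point downwards. *)
Record flow := Flow {
  fV : finType; fE : finType;
  vs : {set fV}; es : {set fE};
  fkind : fV -> vkind;
  fsrc : fE -> option fV;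
  ftgt : fE -> option fV }.
Arguments vs : clear implicits.
Arguments es : clear implicits.
Arguments fkind : clear implicits.
Arguments fsrc : clear implicits.
Arguments ftgt : clear implicits.

Section Flows.
Variable F : flow.

Definition upper_edges : {set fE F} := [set e in es F | fsrc F e == None].
Definition lower_edges : {set fE F} := [set e in es F | ftgt F e == None].

Definition incident (v : fV F) (e : fE F) : bool :=
  (fsrc F e == Some v) || (ftgt F e == Some v).

Definition adj : rel (fV F) := fun v w =>
  [exists e in es F, (fsrc F e == Some v) && (ftgt F e == Some w)].

Definition polarity_ok (pol : fE F -> bool) : Prop :=
  forall v, v \in vs F -> forall e e', e \in es F -> e' \in es F ->
    incident v e -> incident v e' ->
    ((fkind F v \in [:: Ctr; Coctr]) -> pol e = pol e') /\
    ((fkind F v \in [:: Int; Cut]) -> e != e' -> pol e != pol e').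

Definition is_flow : Prop :=
  [/\ forall e, e \in es F ->
        (if fsrc F e is Some v then v \in vs F else true) /\
        (if ftgt F e is Some v then v \in vs F else true),
      forall v, v \in vs F ->
        #|[set e in es F | ftgt F e == Some v]| = nup (fkind F v) /\
        #|[set e in es F | fsrc F e == Some v]| = nlow (fkind F v),
      forall v w, adj v w -> ~~ connect adj w v &
      exists pol : fE F -> bool, polarity_ok pol].

(* Traversal of ai-paths: an oriented edge is (e, true) if traversed
   downwards, (e, false) if upwards.  [step x y]: y may follow x. *)
Definition step (x y : fE F * bool) : bool :=
  match x.2, y.2 with
  | true, true => (ftgt F x.1 != None) && (ftgt F x.1 == fsrc F y.1)
  | false, false => (fsrc F x.1 != None) && (fsrc F x.1 == ftgt F y.1)
  | false, true =>
      if fsrc F x.1 is Some v then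
        [&& fsrc F y.1 == Some v, fkind F v == Int & x.1 != y.1]
      else false
  | true, false =>
      if ftgt F x.1 is Some v then
        [&& ftgt F y.1 == Some v, fkind F v == Cut & x.1 != y.1]
      else false
  end.

Definition ai_cycle (c : seq (fE F * bool)) : bool :=
  [&& c != [::], all (fun x => x.1 \in es F) c, uniq (map fst c) &
      cycle step c].

Definition simple_edge (e : fE F) : bool :=
  (e \in es F) &&
  match fsrc F e, ftgt F e with
  | Some v, Some w => (fkind F v == Int) && (fkind F w == Cut)
  | _, _ => false end.

Definition fragile_cycle (c : seq (fE F * bool)) : bool :=
  ai_cycle c && has (fun x => simple_edge x.1) c.

Definition cycle_free : Prop := forall c, ~~ ai_cycle c.

Definition no_fragile_cycle : Prop := forall c, ~~ fragile_cycle c.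

End Flows.

(* B' : A with the edge 2 (here e2, lower edge of interaction i) now the
   lower edge of a weakening (vertex i relabelled), the simple edge e1 and
   the cut c removed, so that e3 becomes a lower edge. *)
Definition flowB' (B : flow) (i c : fV B) (e1 e3 : fE B) : flow :=
  @Flow (fV B) (fE B) (vs B :\ c) (es B :\ e1)
    (fun v => if v == i then Wk else fkind B v)
    (fsrc B)
    (fun e => if e == e3 then None else ftgt B e).

(* B'' : A with the edge 3 (e3) now the upper edge of a coweakening (vertex c
   relabelled), e1 and the interaction i removed, so that e2 becomes an
   upper edge. *)
Definition flowB'' (B : flow) (i c : fV B) (e1 e2 : fE B) : flow :=
  @Flow (fV B) (fE B) (vs B :\ i) (es B :\ e1)
    (fun v => if v == c then Cowk else fkind B v)
    (fun e => if e == e2 then None else fsrc B e)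
    (ftgt B).

(* Gluing C from D' and D''.  [u'], [l'] map the upper/lower edges of B' to
   those of D'; [u''], [l''] likewise for B'' and D''.
   Vertices: D' | D'' | a cocontraction per upper edge of B | a contraction
   per lower edge of B.
   Edges: D' | D'' minus the edge 2^ (identified with 3~) | new upper edge
   per upper edge of B | new lower edge per lower edge of B. *)
Definition glue (B : flow) (e2 e3 : fE B) (D' D'' : flow)
  (u' l' : fE B -> fE D') (u'' l'' : fE B -> fE D'') : flow :=
  let upB := upper_edges B in
  let loB := lower_edges B in
  let tgt2 : option ((fV D' + fV D'') + (fE B + fE B)) :=
    match [pick e in loB | l'' e == u'' e2] with
    | Some e => Some (inr (inr e))
    | None => omap (fun v => inl (inr v)) (ftgt D'' (u'' e2)) end in
  @Flow ((fV D' + fV D'') + (fE B + fE B))%type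
        ((fE D' + fE D'') + (fE B + fE B))%type
    ([set inl (inl v) | v in vs D'] :|: [set inl (inr v) | v in vs D''] :|:
     [set inr (inl e) | e in upB] :|: [set inr (inr e) | e in loB])
    ([set inl (inl x) | x in es D'] :|:
     [set inl (inr y) | y in es D'' :\ u'' e2] :|:
     [set inr (inl e) | e in upB] :|: [set inr (inr e) | e in loB])
    (fun v => match v with
              | inl (inl v) => fkind D' v
              | inl (inr v) => fkind D'' v
              | inr (inl _) => Coctr
              | inr (inr _) => Ctr end)
    (fun x => match x with
     | inl (inl x) =>
         match [pick e in upB | u' e == x] with
         | Some e => Some (inr (inl e))
         | None => omap (fun v => inl (inl v)) (fsrc D' x) end
     | inl (inr y) =>
         match [pick e in upB | u'' e == y] with
         | Some e => Some (inr (inl e))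
         | None => omap (fun v => inl (inr v)) (fsrc D'' y) end
     | inr (inl e) => None
     | inr (inr e) => Some (inr (inr e)) end)
    (fun x => match x with
     | inl (inl x) =>
         match [pick e in loB | l' e == x] with
         | Some e => Some (inr (inr e))
         | None => if x == l' e3 then tgt2
                   else omap (fun v => inl (inl v)) (ftgt D' x) end
     | inl (inr y) =>
         match [pick e in loB | l'' e == y] with
         | Some e => Some (inr (inr e))
         | None => omap (fun v => inl (inr v)) (ftgt D'' y) end
     | inr (inl e) => Some (inr (inl e))
     | inr (inr e) => None end).

(* [bc B C u l] : B ->_bc C, where u (resp. l) sends each upper (resp. lower)
   edge of B to the corresponding upper (resp. lower) edge of C. *)
Inductive bc : forall B C : flow, (fE B -> fE C) -> (fE B -> fE C) -> Prop :=
| bc_base (B : flow) :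
    no_fragile_cycle B -> bc B B id id
| bc_step (B : flow) (i c : fV B) (e1 e2 e3 : fE B)
    (D' D'' : flow) (u' l' : fE B -> fE D') (u'' l'' : fE B -> fE D'') :
    e1 \in es B -> fsrc B e1 = Some i -> ftgt B e1 = Some c ->
    fkind B i = Int -> fkind B c = Cut ->
    e2 \in es B -> e2 != e1 -> fsrc B e2 = Some i ->
    e3 \in es B -> e3 != e1 -> ftgt B e3 = Some c ->
    (exists cyc, ai_cycle B cyc && (e1 \in map fst cyc)) ->
    bc (flowB' B i c e1 e3) D' u' l' ->
    bc (flowB'' B i c e1 e2) D'' u'' l'' ->
    bc B (glue B e2 e3 D' D'' u' l' u'' l'')
       (fun e => inr (inl e)) (fun e => inr (inr e)).

(* Main.v *)
Require Import Defs.
From mathcomp Require Import all_boot.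
From Stdlib Require Import Classical.

Unset Implicit Arguments. Unset Strict Implicit. Unset Printing Implicit Defensive.

Section Gen.
Variable F : flow.

Definition exitv (x : fE F * bool) := if x.2 then ftgt F x.1 else fsrc F x.1.
Definition entryv (x : fE F * bool) := if x.2 then fsrc F x.1 else ftgt F x.1.

Lemma step_ee x y : step F x y -> exitv x = entryv y /\ exitv x != None.
Proof.
case: x y => [a [|]] [b [|]]; rewrite /step /exitv /entryv /=.
- by case/andP => h /eqP E.
- by case E: (ftgt F a) => [v|] // /and3P[/eqP -> _ _].
- by case E: (fsrc F a) => [v|] // /and3P[/eqP -> _ _].
- by case/andP => h /eqP E.
Qed.

Lemma cyc_succ {c x} : ai_cycle F c -> x \in c -> exists2 y, y \in c & step F x y.
Proof.
case/and4P => _ _ _ cy xc; exists (next c x); first by rewrite mem_next.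
exact: next_cycle.
Qed.

Lemma cyc_pred {c x} : ai_cycle F c -> x \in c -> exists2 y, y \in c & step F y x.
Proof.
case/and4P => _ _ _ cy xc; exists (prev c x); first by rewrite mem_prev.
exact: prev_cycle.
Qed.

Lemma cyc_ends c x : ai_cycle F c -> x \in c ->
  fsrc F x.1 != None /\ ftgt F x.1 != None.
Proof.
move=> cc xc.
have [y _ /step_ee [_ h1]] := cyc_succ cc xc.
have [z _ /step_ee [h2 h3]] := cyc_pred cc xc.
move: h1 h3; rewrite h2 /exitv /entryv; by case: (x.2) => -> ->.
Qed.

Lemma cyc_src c x v : ai_cycle F c -> x \in c -> fsrc F x.1 = Some v ->
  exists2 y, y \in c &
    (ftgt F y.1 == Some v) || ((fkind F v == Int) && (y.1 != x.1)).
Proof.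
move=> cc xc; case: x xc => a [|] xc /= hs.
- have [[z [|]] zc] := cyc_pred cc xc; rewrite /step /= => h.
    exists (z, true) => //=.
    by case/andP: h => _ /eqP ->; rewrite hs eqxx.
  exists (z, false) => //=; move: h; case E: (fsrc F z) => [w|] //.
  case/and3P => /eqP; rewrite hs => -[<-] -> ->; by rewrite orbT.
- have [[z [|]] zc] := cyc_succ cc xc; rewrite /step /= => h.
    exists (z, true) => //=; move: h; rewrite hs => /and3P[_ -> ].
    by rewrite eq_sym => ->; rewrite orbT.
  exists (z, false) => //=; by case/andP: h => _ /eqP <-; rewrite hs eqxx.
Qed.

Lemma cyc_tgt c x v : ai_cycle F c -> x \in c -> ftgt F x.1 = Some v ->
  exists2 y, y \in c &
    (fsrc F y.1 == Some v) || ((fkind F v == Cut) && (y.1 != x.1)).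
Proof.
move=> cc xc; case: x xc => a [|] xc /= hs.
- have [[z [|]] zc] := cyc_succ cc xc; rewrite /step /= => h.
    exists (z, true) => //=; by case/andP: h => _ /eqP <-; rewrite hs eqxx.
  exists (z, false) => //=; move: h; rewrite hs => /and3P[_ -> ].
  by rewrite eq_sym => ->; rewrite orbT.
- have [[z [|]] zc] := cyc_pred cc xc; rewrite /step /= => h.
    exists (z, true) => //=; move: h; case E: (ftgt F z) => [w|] //.
    case/and3P => /eqP; rewrite hs => -[<-] -> ->; by rewrite orbT.
  exists (z, false) => //=; by case/andP: h => _ /eqP ->; rewrite hs eqxx.
Qed.

End Gen.
Arguments step_ee {F x y}.
Arguments cyc_succ {F c x}.
Arguments cyc_pred {F c x}.
Arguments cyc_ends {F c x}.
Arguments cyc_src {F c x v}.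
Arguments cyc_tgt {F c x v}.

Unset Implicit Arguments. Unset Strict Implicit. Unset Printing Implicit Defensive.

Lemma card2_eq {T : finType} {A : {set T}} a b :
  #|A| = 2 -> a \in A -> b \in A -> a != b -> A = [set a; b].
Proof.
move=> cA aA bA ab; apply/eqP; rewrite eq_sym eqEcard cards2 ab cA.
by rewrite subUset !sub1set aA bA.
Qed.

Section BPrime.
Variables (B : flow) (i c : fV B) (e1 e2 e3 : fE B).
Hypotheses (HB : is_flow B) (e1E : e1 \in es B) (s1 : fsrc B e1 = Some i)
  (t1 : ftgt B e1 = Some c) (ki : fkind B i = Int) (kc : fkind B c = Cut)
  (e2E : e2 \in es B) (n21 : e2 != e1) (s2 : fsrc B e2 = Some i)
  (e3E : e3 \in es B) (n31 : e3 != e1) (t3 : ftgt B e3 = Some c).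

Lemma iV : i \in vs B.
Proof. by case: HB => H1 _ _ _; have := H1 _ e1E; rewrite s1 => -[]. Qed.
Lemma cV : c \in vs B.
Proof. by case: HB => H1 _ _ _; have := H1 _ e1E; rewrite t1 => -[]. Qed.
Lemma ic : i != c.
Proof. by apply/eqP => E; move: ki; rewrite E kc. Qed.

Lemma srcI {e} : e \in es B -> fsrc B e = Some i -> e = e1 \/ e = e2.
Proof.
move=> eE se; case: HB => _ H2 _ _; have [_ h] := H2 _ iV; rewrite ki in h.
have := card2_eq e1 e2 h; rewrite !inE e1E s1 e2E s2 eqxx => /(_ isT isT).
rewrite eq_sym n21 => /(_ isT) /setP /(_ e); rewrite !inE eE se eqxx /=.
by move/esym/orP => [] /eqP; auto.
Qed.

Lemma tgtC {e} : e \in es B -> ftgt B e = Some c -> e = e1 \/ e = e3.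
Proof.
move=> eE se; case: HB => _ H2 _ _; have [h _] := H2 _ cV; rewrite kc in h.
have := card2_eq e1 e3 h; rewrite !inE e1E t1 e3E t3 eqxx => /(_ isT isT).
rewrite eq_sym n31 => /(_ isT) /setP /(_ e); rewrite !inE eE se eqxx /=.
by move/esym/orP => [] /eqP; auto.
Qed.

Lemma notgtI {e} : e \in es B -> ftgt B e != Some i.
Proof.
move=> eE; apply/negP => /eqP se; case: HB => _ H2 _ _; have [h _] := H2 _ iV.
rewrite ki /= in h; move/eqP: h; rewrite cards_eq0 => /eqP /setP /(_ e).
by rewrite !inE eE se eqxx.
Qed.

Lemma nosrcC {e} : e \in es B -> fsrc B e != Some c.
Proof.
move=> eE; apply/negP => /eqP se; case: HB => _ H2 _ _; have [_ h] := H2 _ cV.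
rewrite kc /= in h; move/eqP: h; rewrite cards_eq0 => /eqP /setP /(_ e).
by rewrite !inE eE se eqxx.
Qed.

Let B' := flowB' B i c e1 e3.
Let B'' := flowB'' B i c e1 e2.

Lemma upB' : upper_edges B' = upper_edges B.
Proof.
apply/setP => e; rewrite !inE /=; case: (eqVneq e e1) => [->|] //=.
by rewrite s1 andbF.
Qed.

Lemma loB' : lower_edges B' = e3 |: lower_edges B.
Proof.
apply/setP => e; rewrite !inE /=; case: (eqVneq e e3) => [->|ne3] /=.
  by rewrite n31 e3E.
case: (eqVneq e e1) => [->|] //=; by rewrite t1 andbF.
Qed.

Lemma upB'' : upper_edges B'' = e2 |: upper_edges B.
Proof.
apply/setP => e; rewrite !inE /=; case: (eqVneq e e2) => [->|ne2] /=.
  by rewrite n21 e2E.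
case: (eqVneq e e1) => [->|] //=; by rewrite s1 andbF.
Qed.

Lemma loB'' : lower_edges B'' = lower_edges B.
Proof.
apply/setP => e; rewrite !inE /=; case: (eqVneq e e1) => [->|] //=.
by rewrite t1 andbF.
Qed.

Lemma sizeB' : #|es B'| < #|es B|.
Proof. by rewrite /= [X in _ < X](cardsD1 e1) e1E. Qed.
Lemma sizeB'' : #|es B''| < #|es B|.
Proof. by rewrite /= [X in _ < X](cardsD1 e1) e1E. Qed.

Lemma stepB' x y : step B' x y -> step B x y.
Proof.
case: x y => [a [|]] [b [|]]; rewrite /step /=.
- by case: ifP.
- case: ifP => // _; case E: (ftgt B a) => [v|] //.
  case: ifP => // _; by case: ifP => // _ /and3P[].
- case E: (fsrc B a) => [v|] //; by case: ifP => // _ /and3P[].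
- case: ifP => _ //; case/andP => h /eqP E; by move: h; rewrite E.
Qed.

Lemma stepB'' x y : step B'' x y -> step B x y.
Proof.
case: x y => [a [|]] [b [|]]; rewrite /step /=.
- case: ifP => _ //; case/andP => h /eqP E; by move: h; rewrite E.
- case E: (ftgt B a) => [v|] //; by case: ifP => // _ /and3P[].
- case: ifP => // _; case E: (fsrc B a) => [v|] //.
  case: ifP => // _; by case: ifP => // _ /and3P[].
- by case: ifP.
Qed.

Lemma cycB' {cy} : ai_cycle B' cy -> ai_cycle B cy.
Proof.
case/and4P => ne al un cy'; apply/and4P; split => //.
  by apply: sub_all al => x; rewrite /= inE => /andP[].
exact: sub_cycle stepB' _ cy'.
Qed.

Lemma cycB'' {cy} : ai_cycle B'' cy -> ai_cycle B cy.
Proof.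
case/and4P => ne al un cy'; apply/and4P; split => //.
  by apply: sub_all al => x; rewrite /= inE => /andP[].
exact: sub_cycle stepB'' _ cy'.
Qed.

Lemma fragB' : (forall cyc, ai_cycle B cyc -> fragile_cycle B cyc) ->
  forall cyc, ai_cycle B' cyc -> fragile_cycle B' cyc.
Proof.
move=> Hf cy cc; rewrite /fragile_cycle cc /=.
have /andP[_ /hasP[x xc]] := Hf _ (cycB' cc).
have xE' : x.1 \in es B' by case/and4P: cc => _ /allP /(_ x xc).
have /andP[xn1 xE] : (x.1 != e1) && (x.1 \in es B).
  by move: xE'; rewrite /B' /= !inE.
rewrite /simple_edge xE /=.
case Es: (fsrc B x.1) => [v|] //; case Et: (ftgt B x.1) => [w|] // /andP[kv kw].
apply/hasP; exists x => //; rewrite /simple_edge xE' /= Es.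
have [_ ] := cyc_ends cc xc; rewrite /=.
case: ifP => [_ /eqP //|nx3 _]; rewrite Et.
have wi : (w == i) = false.
  by apply/negbTE/eqP => E; move: kw; rewrite E ki.
rewrite wi kw andbT.
case: (eqVneq v i) => [E|]; last by [].
have [E1|E2] := srcI xE (etrans Es (congr1 Some E)); first by rewrite E1 eqxx in xn1.
have [y yc H] := cyc_src (F := B') cc xc (v := v) Es.
have yE : y.1 \in es B.
  by case/and4P: cc => _ /allP /(_ y yc); rewrite /B' /= !inE => /andP[].
move: H; rewrite /= E eqxx /= orbF; case: ifP => _ //.
by rewrite (negbTE (notgtI yE)).
Qed.

Lemma fragB'' : (forall cyc, ai_cycle B cyc -> fragile_cycle B cyc) ->
  forall cyc, ai_cycle B'' cyc -> fragile_cycle B'' cyc.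
Proof.
move=> Hf cy cc; rewrite /fragile_cycle cc /=.
have /andP[_ /hasP[x xc]] := Hf _ (cycB'' cc).
have xE' : x.1 \in es B'' by case/and4P: cc => _ /allP /(_ x xc).
have /andP[xn1 xE] : (x.1 != e1) && (x.1 \in es B) by move: xE'; rewrite /B'' /= !inE.
rewrite /simple_edge xE /=.
case Es: (fsrc B x.1) => [v|] //; case Et: (ftgt B x.1) => [w|] // /andP[kv kw].
apply/hasP; exists x => //; rewrite /simple_edge xE' /= Et.
have [h _] := cyc_ends cc xc; move: h; rewrite /=.
case: ifP => [_ /eqP //|nx2 _]; rewrite Es.
have vc : (v == c) = false.
  by apply/negbTE/eqP => E; move: kv; rewrite E kc.
rewrite vc kv /=.
case: (eqVneq w c) => [E|]; last by [].
have [E1|E3] := tgtC xE (etrans Et (congr1 Some E)); first by rewrite E1 eqxx in xn1.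
have [y yc H] := cyc_tgt (F := B'') cc xc (v := w) Et.
have yE : y.1 \in es B.
  by case/and4P: cc => _ /allP /(_ y yc); rewrite /B'' /= !inE => /andP[].
move: H; rewrite /= E eqxx /= orbF; case: ifP => _ //.
by rewrite (negbTE (nosrcC yE)).
Qed.

Lemma adjB' v w : adj B' v w -> adj B v w.
Proof.
case/existsP => e /andP[]; rewrite /B' /= !inE => /andP[_ eE] /andP[se].
by case: ifP => // _ te; apply/existsP; exists e; rewrite eE se te.
Qed.

Lemma adjB'' v w : adj B'' v w -> adj B v w.
Proof.
case/existsP => e /andP[]; rewrite /B'' /= !inE => /andP[_ eE] /andP[].
by case: ifP => // _ se te; apply/existsP; exists e; rewrite eE se te.
Qed.

Lemma polB' p : polarity_ok B p -> polarity_ok B' p.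
Proof.
move=> pok v; rewrite /B' /= !inE => /andP[_ vV] e e'; rewrite !inE.
move=> /andP[_ eE] /andP[_ e'E] ie ie'.
have ie0 : incident B v e.
  by move: ie; rewrite /incident /=; case: ifP => _ /orP[] H; apply/orP; auto.
have ie0' : incident B v e'.
  by move: ie'; rewrite /incident /=; case: ifP => _ /orP[] H; apply/orP; auto.
have [pa pb] := pok v vV e e' eE e'E ie0 ie0'.
split => hk; [apply: pa | apply: pb]; move: hk; by case: ifP => _; rewrite !inE.
Qed.

Lemma polB'' p : polarity_ok B p -> polarity_ok B'' p.
Proof.
move=> pok v; rewrite /B'' /= !inE => /andP[_ vV] e e'; rewrite !inE.
move=> /andP[_ eE] /andP[_ e'E] ie ie'.
have ie0 : incident B v e.
  by move: ie; rewrite /incident /=; case: ifP => _ /orP[] H; apply/orP; auto.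
have ie0' : incident B v e'.
  by move: ie'; rewrite /incident /=; case: ifP => _ /orP[] H; apply/orP; auto.
have [pa pb] := pok v vV e e' eE e'E ie0 ie0'.
split => hk; [apply: pa | apply: pb]; move: hk; by case: ifP => _; rewrite !inE.
Qed.

Lemma flowB'_ok : is_flow B'.
Proof.
case: HB => H1 H2 H3 [p pok]; split.
- move=> e; rewrite /B' /= !inE => /andP[ne1 eE]; have [h1 h2] := H1 _ eE; split.
    case E: (fsrc B e) => [v|] //; rewrite !inE; move: h1; rewrite E => ->.
    rewrite andbT; apply/eqP => vc; have := nosrcC eE; by rewrite E vc eqxx.
  case: ifP => // ne3; case E: (ftgt B e) => [v|] //; move: h2; rewrite E => vV.
  rewrite !inE vV andbT; apply/eqP => vc; subst v.
  have [E1|E3] := tgtC eE E; [by rewrite E1 eqxx in ne1 | by rewrite E3 eqxx in ne3].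
- move=> v; rewrite /B' /= !inE => /andP[vc vV]; have [h1 h2] := H2 _ vV; split.
    have -> : [set e in es B :\ e1 | (if e == e3 then None else ftgt B e) == Some v]
            = [set e in es B | ftgt B e == Some v].
      apply/setP => e; rewrite !inE; case: (eqVneq e e3) => [->|_].
        by rewrite t3 /= (inj_eq Some_inj) (eq_sym c v) (negbTE vc) !andbF.
      case: (eqVneq e e1) => [->|] //=; by rewrite t1 (inj_eq Some_inj) (eq_sym c v) (negbTE vc) andbF.
    rewrite h1; by case: (eqVneq v i) => [->|]; rewrite ?ki.
  case: (eqVneq v i) => [E|ni].
    subst v; rewrite ki in h2.
    have -> : [set e in es B :\ e1 | fsrc B e == Some i]
            = [set e in es B | fsrc B e == Some i] :\ e1.
      by apply/setP => e; rewrite !inE andbA.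
    by move: h2; rewrite (cardsD1 e1 [set e in es B | _]) !inE e1E s1 !eqxx /= add1n => -[->].
  have -> : [set e in es B :\ e1 | fsrc B e == Some v]
          = [set e in es B | fsrc B e == Some v].
    apply/setP => e; rewrite !inE; case: (eqVneq e e1) => [->|] //=.
    by rewrite s1 (inj_eq Some_inj) (eq_sym i v) (negbTE ni) andbF.
  by rewrite h2.
- move=> v w a; apply/negP => cwv; have := H3 _ _ (adjB' _ _ a).
  have h : subrel (adj B') (connect (adj B)).
    by move=> x y hxy; apply: connect1; apply: adjB'.
  by rewrite (connect_sub h cwv).
- by exists p; apply: polB'.
Qed.

Lemma flowB''_ok : is_flow B''.
Proof.
case: HB => H1 H2 H3 [p pok]; split.
- move=> e; rewrite /B'' /= !inE => /andP[ne1 eE]; have [h1 h2] := H1 _ eE; split.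
    case: ifP => // ne2; case E: (fsrc B e) => [v|] //; move: h1; rewrite E => vV.
    rewrite !inE vV andbT; apply/eqP => vi; subst v.
    have [E1|E2] := srcI eE E; [by rewrite E1 eqxx in ne1 | by rewrite E2 eqxx in ne2].
  case E: (ftgt B e) => [v|] //; rewrite !inE; move: h2; rewrite E => ->.
  rewrite andbT; apply/eqP => vi; have := notgtI eE; by rewrite E vi eqxx.
- move=> v; rewrite /B'' /= !inE => /andP[vi vV]; have [h1 h2] := H2 _ vV; split.
    case: (eqVneq v c) => [E|nc].
      subst v; rewrite kc in h1.
      have -> : [set e in es B :\ e1 | ftgt B e == Some c]
              = [set e in es B | ftgt B e == Some c] :\ e1.
        by apply/setP => e; rewrite !inE andbA.
      by move: h1; rewrite (cardsD1 e1 [set e in es B | _]) !inE e1E t1 !eqxx /= add1n => -[->].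
    have -> : [set e in es B :\ e1 | ftgt B e == Some v]
            = [set e in es B | ftgt B e == Some v].
      apply/setP => e; rewrite !inE; case: (eqVneq e e1) => [->|] //=.
      by rewrite t1 (inj_eq Some_inj) (eq_sym c v) (negbTE nc) andbF.
    by rewrite h1.
  have -> : [set e in es B :\ e1 | (if e == e2 then None else fsrc B e) == Some v]
          = [set e in es B | fsrc B e == Some v].
    apply/setP => e; rewrite !inE; case: (eqVneq e e2) => [->|_].
      by rewrite s2 /= (inj_eq Some_inj) (eq_sym i v) (negbTE vi) !andbF.
    case: (eqVneq e e1) => [->|] //=; by rewrite s1 (inj_eq Some_inj) (eq_sym i v) (negbTE vi) andbF.
  rewrite h2; by case: (eqVneq v c) => [->|]; rewrite ?kc.
- move=> v w a; apply/negP => cwv; have := H3 _ _ (adjB'' _ _ a).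
  have h : subrel (adj B'') (connect (adj B)).
    by move=> x y hxy; apply: connect1; apply: adjB''.
  by rewrite (connect_sub h cwv).
- by exists p; apply: polB''.
Qed.

End BPrime.

Set Implicit Arguments. Unset Strict Implicit. Unset Printing Implicit Defensive.

Lemma pick_some {T T' : finType} (A : {set T}) (f : T -> T') e :
  {in A &, injective f} -> e \in A -> [pick x in A | f x == f e] = Some e.
Proof.
move=> inj eA; case: pickP => [x /andP[xA /eqP fx]|H]; first by rewrite (inj _ _ xA eA fx).
by have := H e; rewrite eA eqxx.
Qed.

Lemma pick_none {T T' : finType} (A : {set T}) (f : T -> T') y :
  (forall e, e \in A -> f e != y) -> [pick x in A | f x == y] = None.
Proof.
move=> H; case: pickP => [x /andP[xA /eqP fx]|//].
by have := H x xA; rewrite fx eqxx.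
Qed.

Lemma omap_eq (A A' : eqType) (g : A -> A') : injective g ->
  forall o o', (omap g o == omap g o') = (o == o').
Proof. by move=> gi [x|] [y|] //; rewrite !(inj_eq (@Some_inj _)) (inj_eq gi). Qed.

Lemma step_tr (F G : flow) (g : fV F -> fV G) (h : fE F -> fE G) a a' b b' :
  injective g -> (forall v, fkind G (g v) = fkind F v) -> (h a == h a') = (a == a') ->
  fsrc G (h a) = omap g (fsrc F a) -> ftgt G (h a) = omap g (ftgt F a) ->
  fsrc G (h a') = omap g (fsrc F a') -> ftgt G (h a') = omap g (ftgt F a') ->
  step G (h a, b) (h a', b') -> step F (a, b) (a', b').
Proof.
move=> gi kg hh s1 t1 s2 t2; rewrite /step /= s1 t1 s2 t2 hh.
case: b b' => [] [] /=.
- by rewrite omap_eq //; case: (ftgt F a).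
- case: (ftgt F a) => [v|] //=.
  by rewrite -[Some (g v)]/(omap g (Some v)) omap_eq // kg.
- case: (fsrc F a) => [v|] //=.
  by rewrite -[Some (g v)]/(omap g (Some v)) omap_eq // kg.
- by rewrite omap_eq //; case: (fsrc F a).
Qed.

Lemma proj_cycle (F G : flow) (g : fV F -> fV G) (h : fE F -> fE G)
  (un : fE G -> fE F) cyc :
  injective g -> injective h -> (forall v, fkind G (g v) = fkind F v) ->
  (forall a, un (h a) = a) ->
  ai_cycle G cyc ->
  (forall y, y \in cyc -> exists2 a, y.1 = h a &
     [/\ a \in es F, fsrc G (h a) = omap g (fsrc F a) & ftgt G (h a) = omap g (ftgt F a)]) ->
  ai_cycle F (map (fun y => (un y.1, y.2)) cyc).
Proof.
move=> gi hi kg unh /and4P[ne al un' cy] H.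
apply/and4P; split.
- by case: cyc ne {al un' cy H}.
- apply/allP => _ /mapP[y yc ->] /=.
  by have [a -> [aE _ _]] := H y yc; rewrite unh.
- rewrite -map_comp; rewrite (map_comp un fst).
  rewrite map_inj_in_uniq //.
  move=> z z' /mapP[y yc ->] /mapP[y' y'c ->].
  have [a -> _] := H y yc; have [a' -> _] := H y' y'c.
  by rewrite !unh => ->.
- rewrite cycle_map; apply: (sub_in_cycle (P := mem cyc)) cy; last first.
    by apply/allP.
  move=> [y1 b] [y1' b'] yc y'c /=.
  have [a /= Ea [aE sa ta]] := H _ yc; have [a' /= Ea' [aE' sa' ta']] := H _ y'c.
  subst y1 y1'; rewrite !unh; apply: step_tr => //; first exact: gi.
  exact: (inj_eq hi).
Qed.

Record Inv (B C : flow) (u l : fE B -> fE C) : Prop := {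
  inv_ui : {in upper_edges B &, injective u};
  inv_uu : {in upper_edges B, forall e, u e \in upper_edges C};
  inv_us : forall x, x \in upper_edges C -> exists2 e, e \in upper_edges B & x = u e;
  inv_li : {in lower_edges B &, injective l};
  inv_ll : {in lower_edges B, forall e, l e \in lower_edges C};
  inv_ls : forall x, x \in lower_edges C -> exists2 e, e \in lower_edges B & x = l e;
  inv_p : forall p, polarity_ok B p -> exists q, [/\ polarity_ok C q,
     {in upper_edges B, forall e, q (u e) = p e} & {in lower_edges B, forall e, q (l e) = p e}] }.

Section Glue.
Variables (B : flow) (i c : fV B) (e1 e2 e3 : fE B) (D' D'' : flow)
  (u' l' : fE B -> fE D') (u'' l'' : fE B -> fE D'').
Hypotheses (HB : is_flow B) (e1E : e1 \in es B) (s1 : fsrc B e1 = Some i)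
  (t1 : ftgt B e1 = Some c) (ki : fkind B i = Int) (kc : fkind B c = Cut)
  (e2E : e2 \in es B) (n21 : e2 != e1) (s2 : fsrc B e2 = Some i)
  (e3E : e3 \in es B) (n31 : e3 != e1) (t3 : ftgt B e3 = Some c).
Hypotheses (HD' : is_flow D') (HD'' : is_flow D'')
  (cf' : cycle_free D') (cf'' : cycle_free D'').
Notation upB := (upper_edges B).
Notation loB := (lower_edges B).
Hypotheses
  (u'inj : {in upB &, injective u'})
  (u'up : {in upB, forall e, u' e \in upper_edges D'})
  (u'sur : forall x, x \in upper_edges D' -> exists2 e, e \in upB & x = u' e)
  (l'inj : {in e3 |: loB &, injective l'})
  (l'lo : {in e3 |: loB, forall e, l' e \in lower_edges D'})
  (l'sur : forall x, x \in lower_edges D' -> exists2 e, e \in e3 |: loB & x = l' e)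
  (u''inj : {in e2 |: upB &, injective u''})
  (u''up : {in e2 |: upB, forall e, u'' e \in upper_edges D''})
  (u''sur : forall x, x \in upper_edges D'' -> exists2 e, e \in e2 |: upB & x = u'' e)
  (l''inj : {in loB &, injective l''})
  (l''lo : {in loB, forall e, l'' e \in lower_edges D''})
  (l''sur : forall x, x \in lower_edges D'' -> exists2 e, e \in loB & x = l'' e)
  (pol' : forall p, polarity_ok B p -> exists q, [/\ polarity_ok D' q,
     {in upB, forall e, q (u' e) = p e} & {in e3 |: loB, forall e, q (l' e) = p e}])
  (pol'' : forall p, polarity_ok B p -> exists q, [/\ polarity_ok D'' q,
     {in e2 |: upB, forall e, q (u'' e) = p e} & {in loB, forall e, q (l'' e) = p e}]).

Let C := glue B e2 e3 D' D'' u' l' u'' l''.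
Notation s := (l' e3).

Lemma n2up : e2 \notin upB.
Proof. by rewrite !inE s2 andbF. Qed.
Lemma n3lo : e3 \notin loB.
Proof. by rewrite !inE t3 andbF. Qed.

Lemma u'inj' : {in upB &, injective u'}. Proof. exact: u'inj. Qed.
Lemma l'injB : {in loB &, injective l'}.
Proof. by move=> a b aB bB; apply: l'inj; rewrite in_setU1 ?aB ?bB orbT. Qed.
Lemma u''injB : {in upB &, injective u''}.
Proof. by move=> a b aB bB; apply: u''inj; rewrite in_setU1 ?aB ?bB orbT. Qed.

Lemma upN (F : flow) x : x \in upper_edges F -> fsrc F x = None.
Proof. by rewrite inE => /andP[_ /eqP]. Qed.
Lemma loN (F : flow) x : x \in lower_edges F -> ftgt F x = None.
Proof. by rewrite inE => /andP[_ /eqP]. Qed.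
Lemma upE (F : flow) x : x \in upper_edges F -> x \in es F.
Proof. by rewrite inE => /andP[]. Qed.
Lemma loE (F : flow) x : x \in lower_edges F -> x \in es F.
Proof. by rewrite inE => /andP[]. Qed.

Lemma sN : ftgt D' s = None.
Proof. by apply: loN; apply: l'lo; rewrite !inE eqxx. Qed.
Lemma sE : s \in es D'.
Proof. by apply: loE; apply: l'lo; rewrite !inE eqxx. Qed.

Lemma sLL_some x v : fsrc D' x = Some v -> fsrc C (inl (inl x)) = Some (inl (inl v)).
Proof.
move=> E; rewrite /= pick_none ?E // => e eU; apply/eqP => ex.
by move: E; rewrite -ex upN ?u'up.
Qed.

Lemma sLL_up e : e \in upB -> fsrc C (inl (inl (u' e))) = Some (inr (inl e)).
Proof. by move=> eU; rewrite /= pick_some. Qed.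

Lemma tLL_some x v : ftgt D' x = Some v -> ftgt C (inl (inl x)) = Some (inl (inl v)).
Proof.
move=> E; rewrite /= pick_none ?ifF ?E //.
  by apply/negbTE/eqP => ex; move: E; rewrite ex sN.
move=> e eL; apply/eqP => ex; move: E; rewrite -ex loN //; apply: l'lo; by rewrite in_setU1 eL orbT.
Qed.

Lemma tLL_lo e : e \in loB -> ftgt C (inl (inl (l' e))) = Some (inr (inr e)).
Proof. by move=> eL; rewrite /= pick_some //; apply: l'injB. Qed.

Lemma pick_s : [pick e in loB | l' e == l' e3] = None.
Proof.
apply: pick_none => e eL; apply/eqP => /l'inj; rewrite !in_setU1 eqxx eL orbT.
move=> /(_ isT isT) E; by move: eL; rewrite E (negbTE n3lo).
Qed.

Lemma tS_lo e : e \in loB -> l'' e = u'' e2 ->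
  ftgt C (inl (inl s)) = Some (inr (inr e)).
Proof. by move=> eL E; rewrite /= pick_s eqxx -E pick_some. Qed.

Lemma tS_some w : ftgt D'' (u'' e2) = Some w ->
  ftgt C (inl (inl s)) = Some (inl (inr w)).
Proof.
move=> E; rewrite /= pick_s eqxx pick_none ?E // => e eL; apply/eqP => ex.
by move: E; rewrite -ex loN ?l''lo.
Qed.

Lemma sRR_some y v : fsrc D'' y = Some v -> fsrc C (inl (inr y)) = Some (inl (inr v)).
Proof.
move=> E; rewrite /= pick_none ?E // => e eU; apply/eqP => ex.
by move: E; rewrite -ex upN ?u''up // in_setU1 eU orbT.
Qed.

Lemma sRR_up e : e \in upB -> fsrc C (inl (inr (u'' e))) = Some (inr (inl e)).
Proof. by move=> eU; rewrite /= pick_some //; apply: u''injB. Qed.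

Lemma tRR_some y v : ftgt D'' y = Some v -> ftgt C (inl (inr y)) = Some (inl (inr v)).
Proof.
move=> E; rewrite /= pick_none ?E // => e eL; apply/eqP => ex.
by move: E; rewrite -ex loN ?l''lo.
Qed.

Lemma tRR_lo e : e \in loB -> ftgt C (inl (inr (l'' e))) = Some (inr (inr e)).
Proof. by move=> eL; rewrite /= pick_some. Qed.

Lemma src_LL z v : fsrc C z = Some (inl (inl v)) ->
  exists2 x, z = inl (inl x) & fsrc D' x = Some v.
Proof.
case: z => [[x|y]|[e|e]] //=.
  case: pickP => [e _|_] //; case E: (fsrc D' x) => [w|] //= [<-].
  by exists x.
by case: pickP => [e _|_] //; case E: (fsrc D'' y) => [w|].
Qed.

Lemma tgt_LL z v : ftgt C z = Some (inl (inl v)) ->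
  exists2 x, z = inl (inl x) & ftgt D' x = Some v.
Proof.
case: z => [[x|y]|[e|e]] //=.
  case: pickP => [e _|_] //; case: ifP => _.
    by case: pickP => [e _|_] //; case E: (ftgt D'' (u'' e2)) => [w|].
  case E: (ftgt D' x) => [w|] //= [<-]; by exists x.
by case: pickP => [e _|_] //; case E: (ftgt D'' y) => [w|].
Qed.

Lemma src_LR z v : fsrc C z = Some (inl (inr v)) ->
  exists2 y, z = inl (inr y) & fsrc D'' y = Some v.
Proof.
case: z => [[x|y]|[e|e]] //=.
  by case: pickP => [e _|_] //; case E: (fsrc D' x) => [w|].
case: pickP => [e _|_] //; case E: (fsrc D'' y) => [w|] //= [<-].
by exists y.
Qed.

Lemma tgt_LR z v : ftgt C z = Some (inl (inr v)) ->
  (exists2 y, z = inl (inr y) & ftgt D'' y = Some v) \/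
  (z = inl (inl s) /\ ftgt D'' (u'' e2) = Some v).
Proof.
case: z => [[x|y]|[e|e]] //=.
  case: pickP => [e _|_] //; case: ifP => [/eqP ->|_].
    case: pickP => [e _|_] //; case E: (ftgt D'' (u'' e2)) => [w|] //= [<-].
    by right.
  by case E: (ftgt D' x) => [w|].
case: pickP => [e _|_] //; case E: (ftgt D'' y) => [w|] //= [<-].
by left; exists y.
Qed.

Lemma src_CO z e : fsrc C z = Some (inr (inl e)) ->
  e \in upB /\ (z = inl (inl (u' e)) \/ z = inl (inr (u'' e))).
Proof.
case: z => [[x|y]|[e'|e']] //=.
  case: pickP => [e' /andP[eU /eqP <-] [<-]|_]; first by split; auto.
  by case E: (fsrc D' x) => [w|].
case: pickP => [e' /andP[eU /eqP <-] [<-]|_]; first by split; auto.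
by case E: (fsrc D'' y) => [w|].
Qed.

Lemma tgt_CO z e : ftgt C z = Some (inr (inl e)) -> z = inr (inl e).
Proof.
case: z => [[x|y]|[e'|e']] //=; last by case=> ->.
  case: pickP => [e' _|_] //; case: ifP => _.
    by case: pickP => [e' _|_] //; case E: (ftgt D'' (u'' e2)) => [w|].
  by case E: (ftgt D' x) => [w|].
by case: pickP => [e' _|_] //; case E: (ftgt D'' y) => [w|].
Qed.

Lemma src_CT z e : fsrc C z = Some (inr (inr e)) -> z = inr (inr e).
Proof.
case: z => [[x|y]|[e'|e']] //=; last by case=> ->.
  by case: pickP => [e' _|_] //; case E: (fsrc D' x) => [w|].
by case: pickP => [e' _|_] //; case E: (fsrc D'' y) => [w|].
Qed.

Lemma tgt_CT z e : ftgt C z = Some (inr (inr e)) ->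
  e \in loB /\ [\/ z = inl (inl (l' e)), z = inl (inr (l'' e)) |
                  (z = inl (inl s) /\ l'' e = u'' e2)].
Proof.
case: z => [[x|y]|[e'|e']] //=.
  case: pickP => [e' /andP[eL /eqP <-] [<-]|_]; first by split; [|constructor 1].
  case: ifP => [/eqP ->|_].
    case: pickP => [e' /andP[eL /eqP E] [<-]|_]; first by split; [|constructor 3].
    by case E: (ftgt D'' (u'' e2)) => [w|].
  by case E: (ftgt D' x) => [w|].
case: pickP => [e' /andP[eL /eqP <-] [<-]|_]; first by split; [|constructor 2].
by case E: (ftgt D'' y) => [w|].
Qed.

Lemma imN {A A' : finType} (f : A -> A') (D : {set A}) z :
  (forall a, z != f a) -> (z \in f @: D) = false.
Proof. by move=> H; apply/imsetP => -[a _ E]; move: (H a); rewrite E eqxx. Qed.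

Definition esCb (z : fE C) : bool :=
  match z with
  | inl (inl x) => x \in es D'
  | inl (inr y) => (y \in es D'') && (y != u'' e2)
  | inr (inl e) => e \in upB
  | inr (inr e) => e \in loB end.

Lemma esC z : (z \in es C) = esCb z.
Proof.
case: z => [[x|y]|[e|e]]; rewrite /C /glue /= !inE.
- rewrite mem_imset; last by move=> ? ? [].
  by rewrite !imN ?orbF // => *.
- rewrite imN => [|*] //; rewrite mem_imset; last by move=> ? ? [].
  by rewrite !imN ?orbF ?inE 1?andbC // => *.
- rewrite imN => [|*] //; rewrite imN => [|*] //; rewrite mem_imset; last by move=> ? ? [].
  by rewrite !imN ?orbF ?inE // => *.
- rewrite imN => [|*] //; rewrite imN => [|*] //; rewrite imN => [|*] //.
  rewrite mem_imset; last by move=> ? ? [].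
  by rewrite !inE.
Qed.

Definition vsCb (v : fV C) : bool :=
  match v with
  | inl (inl a) => a \in vs D'
  | inl (inr a) => a \in vs D''
  | inr (inl e) => e \in upB
  | inr (inr e) => e \in loB end.

Lemma vsC v : (v \in vs C) = vsCb v.
Proof.
case: v => [[x|y]|[e|e]]; rewrite /C /glue /= !inE.
- rewrite mem_imset; last by move=> ? ? [].
  by rewrite !imN ?orbF // => *.
- rewrite imN => [|*] //; rewrite mem_imset; last by move=> ? ? [].
  by rewrite !imN ?orbF // => *.
- rewrite imN => [|*] //; rewrite imN => [|*] //; rewrite mem_imset; last by move=> ? ? [].
  by rewrite !imN ?orbF ?inE // => *.
- rewrite imN => [|*] //; rewrite imN => [|*] //; rewrite imN => [|*] //.
  rewrite mem_imset; last by move=> ? ? [].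
  by rewrite !inE.
Qed.

Lemma D'src x : x \in es D' -> fsrc D' x = None -> exists2 e, e \in upB & x = u' e.
Proof. by move=> xE E; apply: u'sur; rewrite inE xE E eqxx. Qed.

Lemma D'tgt x : x \in es D' -> ftgt D' x = None ->
  x = s \/ exists2 e, e \in loB & x = l' e.
Proof.
move=> xE E; have xL : x \in lower_edges D' by rewrite inE xE E eqxx.
have [e eL ->] := l'sur xL.
by case/setU1P: eL => [->|eL]; [left | right; exists e].
Qed.

Lemma D''src y : y \in es D'' -> fsrc D'' y = None ->
  y = u'' e2 \/ exists2 e, e \in upB & y = u'' e.
Proof.
move=> yE E; have yU : y \in upper_edges D'' by rewrite inE yE E eqxx.
have [e eU ->] := u''sur yU.
by case/setU1P: eU => [->|eU]; [left | right; exists e].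
Qed.

Lemma D''tgt y : y \in es D'' -> ftgt D'' y = None -> exists2 e, e \in loB & y = l'' e.
Proof. by move=> yE E; apply: l''sur; rewrite inE yE E eqxx. Qed.

Lemma u2E : u'' e2 \in es D''.
Proof. by apply: upE; apply: u''up; rewrite !inE eqxx. Qed.
Lemma u'E e : e \in upB -> u' e \in es D'.
Proof. by move=> eU; apply: upE; apply: u'up. Qed.
Lemma u''E e : e \in upB -> u'' e \in es D''.
Proof. by move=> eU; apply: upE; apply: u''up; rewrite in_setU1 eU orbT. Qed.
Lemma l'E e : e \in loB -> l' e \in es D'.
Proof. by move=> eL; apply: loE; apply: l'lo; rewrite in_setU1 eL orbT. Qed.
Lemma l''E e : e \in loB -> l'' e \in es D''.
Proof. by move=> eL; apply: loE; apply: l''lo. Qed.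
Lemma u''n2 e : e \in upB -> u'' e != u'' e2.
Proof.
move=> eU; apply/eqP => /u''inj; rewrite !in_setU1 eU eqxx orbT => /(_ isT isT) E.
by move: eU; rewrite E (negbTE n2up).
Qed.
Lemma l'ns e : e \in loB -> l' e != s.
Proof.
move=> eL; apply/eqP => /l'inj; rewrite !in_setU1 eL eqxx orbT => /(_ isT isT) E.
by move: eL; rewrite E (negbTE n3lo).
Qed.

Lemma flowC1 : forall z, z \in es C ->
  (if fsrc C z is Some v then v \in vs C else true) /\
  (if ftgt C z is Some v then v \in vs C else true).
Proof.
case: HD' => H1' _ _ _; case: HD'' => H1'' _ _ _.
move=> z zE; rewrite esC in zE; case: z zE => [[x|y]|[e|e]] zE.
- have xE : x \in es D' := zE; have [h1 h2] := H1' _ xE; split.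
    case E: (fsrc D' x) => [v|].
      by rewrite (sLL_some E) vsC /=; move: h1; rewrite E.
    by have [e eU ->] := D'src xE E; rewrite sLL_up // vsC.
  case E: (ftgt D' x) => [v|].
    by rewrite (tLL_some E) vsC /=; move: h2; rewrite E.
  have [->|[e eL ->]] := D'tgt xE E; last by rewrite tLL_lo // vsC.
  case E2: (ftgt D'' (u'' e2)) => [w|].
    rewrite (tS_some E2) vsC /=; have [_] := H1'' _ u2E; by rewrite E2.
  have [e eL Ee] := D''tgt u2E E2; by rewrite (tS_lo eL (esym Ee)) vsC.
- have /andP[yE yn] : (y \in es D'') && (y != u'' e2) := zE.
  have [h1 h2] := H1'' _ yE; split.
    case E: (fsrc D'' y) => [v|].
      by rewrite (sRR_some E) vsC /=; move: h1; rewrite E.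
    have [Ey|[e eU ->]] := D''src yE E; first by rewrite Ey eqxx in yn.
    by rewrite sRR_up // vsC.
  case E: (ftgt D'' y) => [v|].
    by rewrite (tRR_some E) vsC /=; move: h2; rewrite E.
  by have [e eL ->] := D''tgt yE E; rewrite tRR_lo // vsC.
- by rewrite /= !vsC.
- by rewrite /= !vsC.
Qed.

Lemma cntLL v : v \in vs D' ->
  #|[set z in es C | ftgt C z == Some (inl (inl v))]| = nup (fkind D' v) /\
  #|[set z in es C | fsrc C z == Some (inl (inl v))]| = nlow (fkind D' v).
Proof.
case: HD' => _ H2 _ _ vV; have [h1 h2] := H2 _ vV; split.
- rewrite -h1; have -> : [set z in es C | ftgt C z == Some (inl (inl v))] =
     (fun x => inl (inl x) : fE C) @: [set x in es D' | ftgt D' x == Some v].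
    apply/setP => z; rewrite in_set esC; apply/idP/idP.
      case/andP=> zE /eqP /tgt_LL [x Ez Ex]; subst z.
      have xE : x \in es D' := zE.
      by apply/imsetP; exists x => //; rewrite inE xE Ex eqxx.
    case/imsetP => x; rewrite inE => /andP[xE /eqP Ex] ->.
    by rewrite (tLL_some Ex) [esCb _]/= xE eqxx.
  by rewrite card_imset // => ? ? [].
- rewrite -h2; have -> : [set z in es C | fsrc C z == Some (inl (inl v))] =
     (fun x => inl (inl x) : fE C) @: [set x in es D' | fsrc D' x == Some v].
    apply/setP => z; rewrite in_set esC; apply/idP/idP.
      case/andP=> zE /eqP /src_LL [x Ez Ex]; subst z.
      have xE : x \in es D' := zE.
      by apply/imsetP; exists x => //; rewrite inE xE Ex eqxx.
    case/imsetP => x; rewrite inE => /andP[xE /eqP Ex] ->.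
    by rewrite (sLL_some Ex) [esCb _]/= xE eqxx.
  by rewrite card_imset // => ? ? [].
Qed.

Definition fR (y : fE D'') : fE C :=
  if y == u'' e2 then inl (inl s) else inl (inr y).

Lemma fR_inj : injective fR.
Proof.
move=> a b; rewrite /fR; case: ifP => [/eqP ->|_]; case: ifP => [/eqP -> //|_] //.
by case=> ->.
Qed.

Lemma fR_E y : y \in es D'' -> fR y \in es C.
Proof.
by move=> yE; rewrite /fR; case: ifP => h; rewrite esC [esCb _]/= ?sE // yE h.
Qed.

Lemma cntLR v : v \in vs D'' ->
  #|[set z in es C | ftgt C z == Some (inl (inr v))]| = nup (fkind D'' v) /\
  #|[set z in es C | fsrc C z == Some (inl (inr v))]| = nlow (fkind D'' v).
Proof.
case: HD'' => _ H2 _ _ vV; have [h1 h2] := H2 _ vV; split.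
- rewrite -h1; have -> : [set z in es C | ftgt C z == Some (inl (inr v))] =
     fR @: [set y in es D'' | ftgt D'' y == Some v].
    apply/setP => z; rewrite in_set ?in_set1 ?in_set2; apply/idP/idP.
      case/andP=> zE /eqP /tgt_LR [[y Ez Ey]|[Ez Ey]]; subst z.
        move: zE; rewrite esC => /andP[yE yn].
        apply/imsetP; exists y; first by rewrite inE yE Ey eqxx.
        by rewrite /fR (negbTE yn).
      apply/imsetP; exists (u'' e2); first by rewrite inE u2E Ey eqxx.
      by rewrite /fR eqxx.
    case/imsetP => y; rewrite inE => /andP[yE /eqP Ey] ->.
    rewrite fR_E // andTb /fR; case: ifP => [/eqP E|yn].
      by rewrite (tS_some (w := v)) -?E.
    by rewrite (tRR_some Ey).
  by rewrite card_imset //; apply: fR_inj.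
- rewrite -h2; have -> : [set z in es C | fsrc C z == Some (inl (inr v))] =
     (fun x => inl (inr x) : fE C) @: [set x in es D'' | fsrc D'' x == Some v].
    apply/setP => z; rewrite in_set esC; apply/idP/idP.
      case/andP=> zE /eqP /src_LR [x Ez Ex]; subst z.
      have /andP[xE _] : (x \in es D'') && (x != u'' e2) := zE.
      by apply/imsetP; exists x => //; rewrite inE xE Ex eqxx.
    case/imsetP => x; rewrite inE => /andP[xE /eqP Ex] ->.
    rewrite (sRR_some Ex) [esCb _]/= xE eqxx andbT.
    by apply/eqP => E; move: Ex; rewrite E upN // u''up // !inE eqxx.
  by rewrite card_imset // => ? ? [].
Qed.

Lemma cntCO e : e \in upB ->
  #|[set z in es C | ftgt C z == Some (inr (inl e))]| = 1 /\
  #|[set z in es C | fsrc C z == Some (inr (inl e))]| = 2.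
Proof.
move=> eU; split.
- have -> : [set z in es C | ftgt C z == Some (inr (inl e))] = [set inr (inl e)].
    apply/setP => z; rewrite in_set ?in_set1 ?in_set2; apply/idP/idP.
      by case/andP => _ /eqP /tgt_CO ->.
    by move/eqP => ->; rewrite esC [esCb _]/= eU eqxx.
  by rewrite cards1.
- have -> : [set z in es C | fsrc C z == Some (inr (inl e))] =
            [set inl (inl (u' e)); inl (inr (u'' e))].
    apply/setP => z; rewrite in_set ?in_set1 ?in_set2; apply/idP/idP.
      by case/andP => _ /eqP /src_CO [_ [->|->]]; rewrite eqxx ?orbT.
    case/orP => /eqP ->; rewrite esC [esCb _]/=.
      by rewrite u'E // sLL_up // eqxx.
    by rewrite u''E // u''n2 // sRR_up // eqxx.
  by rewrite cards2.
Qed.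

Lemma cntCT e : e \in loB ->
  #|[set z in es C | ftgt C z == Some (inr (inr e))]| = 2 /\
  #|[set z in es C | fsrc C z == Some (inr (inr e))]| = 1.
Proof.
move=> eL; split.
- have -> : [set z in es C | ftgt C z == Some (inr (inr e))] =
            [set inl (inl (l' e)); fR (l'' e)].
    apply/setP => z; rewrite in_set ?in_set1 ?in_set2; apply/idP/idP.
      case/andP => zE /eqP /tgt_CT [_ [->|Ez|[-> E]]]; first by rewrite eqxx.
        subst z; move: zE; rewrite esC => /andP[_ yn].
        by rewrite /fR (negbTE yn) eqxx orbT.
      by rewrite /fR E eqxx eqxx orbT.
    case/orP => /eqP ->; first by rewrite esC [esCb _]/= l'E // tLL_lo // eqxx.
    rewrite fR_E ?l''E // andTb /fR; case: ifP => [/eqP E|_].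
      by rewrite (tS_lo eL E) eqxx.
    by rewrite tRR_lo // eqxx.
  rewrite cards2 /fR; case: ifP => _ //.
  by rewrite /= l'ns.
- have -> : [set z in es C | fsrc C z == Some (inr (inr e))] = [set inr (inr e)].
    apply/setP => z; rewrite in_set ?in_set1 ?in_set2; apply/idP/idP.
      by case/andP => _ /eqP /src_CT ->.
    by move/eqP => ->; rewrite esC [esCb _]/= eL eqxx.
  by rewrite cards1.
Qed.

Definition rk (v : fV C) : nat :=
  match v with inr (inl _) => 0 | inl (inl _) => 1 | inl (inr _) => 2 | inr (inr _) => 3 end.
Definition same (v w : fV C) : bool :=
  match v, w with
  | inl (inl a), inl (inl b) => connect (adj D') a b
  | inl (inr a), inl (inr b) => connect (adj D'') a b
  | _, _ => v == w end.
Definition sadj (v w : fV C) : bool :=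
  match v, w with
  | inl (inl a), inl (inl b) => adj D' a b
  | inl (inr a), inl (inr b) => adj D'' a b
  | _, _ => false end.

Lemma adjC v w : adj C v w -> (rk v < rk w) || sadj v w.
Proof.
case/existsP => z /andP[zE /andP[/eqP sz /eqP tz]].
case: v sz => [[a|a]|[e|e]] sz.
- have [x Ez Ex] := src_LL sz; subst z.
  have xE : x \in es D' by move: zE; rewrite esC.
  case: w tz => [[b|b]|[e|e]] tz //.
    have [x' [Ex'] Ex''] := tgt_LL tz; subst x'.
    by apply/existsP; exists x; rewrite xE Ex Ex'' !eqxx.
  by have := tgt_CO tz.
- have [y Ez Ey] := src_LR sz; subst z.
  have /andP[yE _] : (y \in es D'') && (y != u'' e2) by move: zE; rewrite esC.
  case: w tz => [[b|b]|[e|e]] tz //.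
  + by have [x' Ex' _] := tgt_LL tz.
  + case: (tgt_LR tz) => [[y' [Ey'] Ey'']|[Ez _]] //; subst y'.
    by apply/existsP; exists y; rewrite yE Ey Ey'' !eqxx.
  + by have := tgt_CO tz.
- case: w tz => [[b|b]|[e'|e']] tz //.
  by have Ez := tgt_CO tz; subst z.
- by have Ez := src_CT sz; subst z.
Qed.

Lemma connC v w : connect (adj C) v w -> (rk v <= rk w) && ((rk v == rk w) ==> same v w).
Proof.
case/connectP => p; elim: p v => [|x p IH] v /=.
  by move=> _ ->; rewrite leqnn eqxx /=; case: v => [[a|a]|[e|e]] //=; rewrite eqxx.
case/andP => avx pth lw; have /andP[h1 h2] := IH x pth lw.
case/orP: (adjC avx) => H.
  by rewrite (leq_trans (ltnW H) h1) /= (ltn_eqF (leq_trans H h1)).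
case: v x avx H h1 h2 {IH pth lw} => [[a|a]|[e|e]] [[b|b]|[e'|e']] //= _ H;
  case: w => [[d|d]|[f|f]] //= _ H2.
  exact: connect_trans (connect1 H) H2.
exact: connect_trans (connect1 H) H2.
Qed.

Lemma dagC v w : adj C v w -> ~~ connect (adj C) w v.
Proof.
move=> a; apply/negP => /connC /andP[h1 h2]; case/orP: (adjC a) => H.
  by move: (leq_ltn_trans h1 H); rewrite ltnn.
case: HD' => _ _ H3' _; case: HD'' => _ _ H3'' _.
case: v w a H h1 h2 => [[a'|a']|[e|e]] [[b|b]|[e'|e']] //= _ H _ h2.
  by move: (H3' _ _ H); rewrite h2.
by move: (H3'' _ _ H); rewrite h2.
Qed.

Lemma pe23 p : polarity_ok B p -> p e2 = p e3.
Proof.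
move=> pok; case: HB => H1 _ _ _.
have [iV cV] : i \in vs B /\ c \in vs B by have := H1 _ e1E; rewrite s1 t1.
have [_ h1] := pok i iV e1 e2 e1E e2E
   (introT orP (or_introl (introT eqP s1))) (introT orP (or_introl (introT eqP s2))).
have [_ h2] := pok c cV e1 e3 e1E e3E
   (introT orP (or_intror (introT eqP t1))) (introT orP (or_intror (introT eqP t3))).
move: h1 h2; rewrite ki kc (eq_sym e1 e2) n21 (eq_sym e1 e3) n31 /= => /(_ isT isT) + /(_ isT isT).
by case: (p e1); case: (p e2); case: (p e3).
Qed.

Definition bk (z : fE C) : fE D'' := if z is inl (inr y) then y else u'' e2.

Lemma incLL z a : incident C (inl (inl a)) z -> exists2 x, z = inl (inl x) & incident D' a x.
Proof.
case/orP => /eqP.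
  by case/src_LL => x -> E; exists x => //; rewrite /incident E eqxx.
by case/tgt_LL => x -> E; exists x => //; rewrite /incident E eqxx orbT.
Qed.

Lemma incLR z a : z \in es C -> incident C (inl (inr a)) z ->
  [/\ bk z \in es D'', incident D'' a (bk z) & (z = inl (inr (bk z)) \/ z = inl (inl s))].
Proof.
move=> zE; case/orP => /eqP.
  case/src_LR => y Ez E; subst z; move: zE; rewrite esC => /andP[yE _].
  by split => //=; [rewrite /incident E eqxx | left].
case/tgt_LR => [[y Ez E]|[Ez E]]; subst z.
  move: zE; rewrite esC => /andP[yE _].
  by split => //=; [rewrite /incident E eqxx orbT | left].
by split => //=; [exact: u2E | rewrite /incident E eqxx orbT | right].
Qed.

Lemma polC p : polarity_ok B p -> exists q, [/\ polarity_ok C q,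
  {in upB, forall e, q (inr (inl e)) = p e} & {in loB, forall e, q (inr (inr e)) = p e}].
Proof.
move=> pok.
have [q' [pq' qu' ql']] := pol' pok; have [q'' [pq'' qu'' ql'']] := pol'' pok.
have p23 := pe23 pok.
pose q (z : fE C) := match z with
  | inl (inl x) => q' x | inl (inr y) => q'' y | inr (inl e) => p e | inr (inr e) => p e end.
exists q; split => //.
have qs : q' s = q'' (u'' e2).
  by rewrite ql' ?qu'' ?p23 // !in_setU1 eqxx.
move=> v; rewrite vsC; case: v => [[a|a]|[e|e]] vV z z' zE z'E iz iz'.
- have [x Ez ix] := incLL iz; have [x' Ez' ix'] := incLL iz'; subst z z'.
  have xE : x \in es D' by move: zE; rewrite esC.
  have x'E : x' \in es D' by move: z'E; rewrite esC.
  exact: (pq' a vV x x' xE x'E ix ix').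
- have [bE ib Hz] := incLR zE iz; have [bE' ib' Hz'] := incLR z'E iz'.
  have qb w : w \in es C -> (w = inl (inr (bk w)) \/ w = inl (inl s)) -> q w = q'' (bk w).
    by move=> _ [-> //|->].
  rewrite (qb z zE Hz) (qb z' z'E Hz').
  have [pa pb] := pq'' a vV (bk z) (bk z') bE bE' ib ib'.
  split => // hk nz; apply: pb => //; apply: contra nz => /eqP E.
  case: Hz Hz' => [Ez|Ez] [Ez'|Ez'].
  + by rewrite Ez Ez' E.
  + move: zE; rewrite Ez esC [esCb _]/= E Ez' /=; by rewrite eqxx andbF.
  + move: z'E; rewrite Ez' esC [esCb _]/= -E Ez /=; by rewrite eqxx andbF.
  + by rewrite Ez Ez'.
- have qe w : incident C (inr (inl e)) w -> q w = p e.
    case/orP => /eqP.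
      by case/src_CO => eU [->|->] /=; [rewrite qu' | rewrite qu'' // in_setU1 eU orbT].
    by move/tgt_CO => ->.
  by split => // _; rewrite (qe _ iz) (qe _ iz').
- have qe w : incident C (inr (inr e)) w -> q w = p e.
    case/orP => /eqP.
      by move/src_CT => ->.
    case/tgt_CT => eL [->|->|[-> E]] /=.
    + by rewrite ql' // in_setU1 eL orbT.
    + by rewrite ql''.
    + by rewrite qs -E ql''.
  by split => // _; rewrite (qe _ iz) (qe _ iz').
Qed.

Lemma flowC : is_flow C.
Proof.
split.
- exact: flowC1.
- move=> v; rewrite vsC; case: v => [[a|a]|[e|e]] /= vV.
  + exact: cntLL.
  + exact: cntLR.
  + exact: cntCO.
  + exact: cntCT.
- exact: dagC.
- case: HB => _ _ _ [p pok]; have [q [pq _ _]] := polC pok; by exists q.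
Qed.

Lemma upC : upper_edges C = [set inr (inl e) | e in upB].
Proof.
apply/setP => z; rewrite /upper_edges in_set esC; case: z => [[x|y]|[e|e]].
- rewrite imN => [|*] //; rewrite [esCb _]/=; apply/negP => /andP[xE].
  case E: (fsrc D' x) => [v|]; first by rewrite (sLL_some E).
  by have [e eU Ex] := D'src xE E; rewrite Ex sLL_up.
- rewrite imN => [|*] //; rewrite [esCb _]/=; apply/negP => /andP[/andP[yE yn]].
  case E: (fsrc D'' y) => [v|]; first by rewrite (sRR_some E).
  have [Ey|[e eU Ey]] := D''src yE E; first by rewrite Ey eqxx in yn.
  by rewrite Ey sRR_up.
- by rewrite mem_imset ?andbT // => ? ? [].
- by rewrite imN => [|*] //; rewrite andbF.
Qed.

Lemma loC : lower_edges C = [set inr (inr e) | e in loB].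
Proof.
apply/setP => z; rewrite /lower_edges in_set esC; case: z => [[x|y]|[e|e]].
- rewrite imN => [|*] //; rewrite [esCb _]/=; apply/negP => /andP[xE].
  case E: (ftgt D' x) => [v|]; first by rewrite (tLL_some E).
  have [Ex|[e eL Ex]] := D'tgt xE E; rewrite Ex; last by rewrite tLL_lo.
  case E2: (ftgt D'' (u'' e2)) => [w|]; first by rewrite (tS_some E2).
  by have [e eL Ee] := D''tgt u2E E2; rewrite (tS_lo eL (esym Ee)).
- rewrite imN => [|*] //; rewrite [esCb _]/=; apply/negP => /andP[/andP[yE yn]].
  case E: (ftgt D'' y) => [v|]; first by rewrite (tRR_some E).
  by have [e eL Ey] := D''tgt yE E; rewrite Ey tRR_lo.
- by rewrite imN => [|*] //; rewrite andbF.
- by rewrite mem_imset ?andbT // => ? ? [].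
Qed.

Section Cyc.
Variable cyc : seq (fE C * bool).
Hypothesis cc : ai_cycle C cyc.

Lemma cycE x : x \in cyc -> x.1 \in es C.
Proof. by case/and4P: cc => _ /allP H _ _ /H. Qed.

Lemma no_coctr x e : x \in cyc -> fsrc C x.1 = Some (inr (inl e)) -> False.
Proof.
move=> xc E; have [y yc /orP[/eqP|/andP[//]]] := cyc_src cc xc E.
move/tgt_CO => Ey; have [h _] := cyc_ends cc yc.
by move: h; rewrite Ey.
Qed.

Lemma no_ctr x e : x \in cyc -> ftgt C x.1 = Some (inr (inr e)) -> False.
Proof.
move=> xc E; have [y yc /orP[/eqP|/andP[//]]] := cyc_tgt cc xc E.
move/src_CT => Ey; have [_ h] := cyc_ends cc yc.
by move: h; rewrite Ey.
Qed.

Definition sideV (o : option (fV C)) : bool :=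
  if o is Some (inl (inl _)) then true else false.

Lemma cyc_cls x : x \in cyc ->
  [\/ exists2 a, x.1 = inl (inl a) & [/\ a \in es D', a != s,
        fsrc C x.1 = omap (fun v => inl (inl v)) (fsrc D' a) &
        ftgt C x.1 = omap (fun v => inl (inl v)) (ftgt D' a)],
      exists2 b, x.1 = inl (inr b) & [/\ b \in es D'',
        fsrc C x.1 = omap (fun v => inl (inr v)) (fsrc D'' b) &
        ftgt C x.1 = omap (fun v => inl (inr v)) (ftgt D'' b)] |
      [/\ x.1 = inl (inl s), sideV (fsrc C x.1) & ~~ sideV (ftgt C x.1)]].
Proof.
move=> xc; case: x xc => z bb xc; have xE := cycE xc; have [hs ht] := cyc_ends cc xc.
rewrite -[(z, bb).1]/z in xE hs ht *.
case: z xc xE hs ht => [[a|b]|[e|e]] xc xE hs ht.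
- have aE : a \in es D' by move: xE; rewrite esC.
  case Es: (fsrc D' a) => [v|]; last first.
    have [e eU Ea] := D'src aE Es; subst a; exfalso.
    exact: (no_coctr xc (sLL_up eU)).
  case Et: (ftgt D' a) => [w|].
    constructor 1; exists a => //; split => //; rewrite ?(sLL_some Es) ?(tLL_some Et) ?Es ?Et //.
    by apply/eqP => Ea; move: Et; rewrite Ea sN.
  have [Ea|[e eL Ea]] := D'tgt aE Et; subst a.
    case E2: (ftgt D'' (u'' e2)) => [w|].
      by constructor 3; split => //; rewrite ?(sLL_some Es) ?(tS_some E2).
    have [e eL Ee] := D''tgt u2E E2; exfalso.
    exact: (no_ctr xc (tS_lo eL (esym Ee))).
  by exfalso; exact: (no_ctr xc (tLL_lo eL)).
- have /andP[bE bn] : (b \in es D'') && (b != u'' e2) by move: xE; rewrite esC.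
  case Es: (fsrc D'' b) => [v|]; last first.
    have [Eb|[e eU Eb]] := D''src bE Es; first by rewrite Eb eqxx in bn.
    by subst b; exfalso; exact: (no_coctr xc (sRR_up eU)).
  case Et: (ftgt D'' b) => [w|]; last first.
    have [e eL Eb] := D''tgt bE Et; subst b; exfalso.
    exact: (no_ctr xc (tRR_lo eL)).
  constructor 2; exists b => //; split => //; by rewrite ?(sRR_some Es) ?(tRR_some Et) ?Es ?Et.
- by move: hs; rewrite [fsrc _ _]/=.
- by move: ht; rewrite [ftgt _ _]/=.
Qed.

Lemma sideLL (o : option (fV D')) : sideV (omap (fun v => inl (inl v)) o) = (o != None).
Proof. by case: o. Qed.
Lemma sideLR (o : option (fV D'')) : sideV (omap (fun v => inl (inr v)) o) = false.
Proof. by case: o. Qed.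

Lemma side_ok x : x \in cyc -> x.1 != inl (inl s) ->
  sideV (exitv C x) = sideV (entryv C x).
Proof.
move=> xc xn; have [hs ht] := cyc_ends cc xc.
rewrite /exitv /entryv.
case: (cyc_cls xc) => [[a Ea [_ _ Es Et]]|[b Eb [_ Es Et]]|[Ex _ _]].
- move: hs ht; rewrite Es Et; case: (fsrc D' a) => // ? _; case: (ftgt D' a) => // ? _; by case: (x.2).
- by rewrite Es Et; case: (x.2); rewrite !sideLR.
- by rewrite Ex eqxx in xn.
Qed.

Lemma side_s x : x \in cyc -> x.1 = inl (inl s) ->
  sideV (exitv C x) != sideV (entryv C x).
Proof.
move=> xc Ex; rewrite /exitv /entryv.
case: (cyc_cls xc) => [[a Ea [_ an _ _]]|[b Eb _]|[_ h1 h2]].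
- by move: Ea; rewrite Ex => -[Ea]; rewrite Ea eqxx in an.
- by rewrite Ex in Eb.
- by case: (x.2); move: h1 h2; case: (sideV _); case: (sideV _).
Qed.

Lemma side_path p x : path (step C) x p ->
  all (fun y => (y \in cyc) && (y.1 != inl (inl s))) p ->
  all (fun y => sideV (exitv C y) == sideV (exitv C x)) p.
Proof.
elim: p x => [|y p IH] x //=; case/andP => sxy pth /andP[/andP[yc yn] al].
have [E _] := step_ee sxy.
have h : sideV (exitv C y) = sideV (exitv C x) by rewrite (side_ok yc yn) E.
by rewrite h eqxx /=; move: (IH y pth al); rewrite h.
Qed.

Lemma cyc_false : False.
Proof.
case: (boolP (has (fun y => y.1 == inl (inl s)) cyc)) => [/hasP[x0 x0c /eqP Ex0] | nh].
- case: (rot_to x0c) => k rest Hr.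
  have cc' : ai_cycle C (x0 :: rest).
    rewrite -Hr; case/and4P: cc => ne al un cy; apply/and4P; split.
    + by rewrite Hr.
    + by rewrite /rot all_cat andbC -all_cat cat_take_drop.
    + by rewrite map_rot rot_uniq.
    + by rewrite rot_cycle.
  case/and4P: (cc') => _ _ /= /andP[nx un] cy.
  move: cy; rewrite /cycle rcons_path => /andP[pth sl].
  have al : all (fun y => (y \in cyc) && (y.1 != inl (inl s))) rest.
    apply/allP => y yr; rewrite -(mem_rot k) Hr inE yr orbT /=.
    by apply: contra nx => /eqP E; rewrite Ex0 -E; apply: map_f.
  have sp := side_path pth al.
  have hl : sideV (exitv C (last x0 rest)) = sideV (exitv C x0).
    have := mem_last x0 rest; rewrite inE => /orP[/eqP -> //|lr].
    by move/allP: sp => /(_ _ lr) /eqP.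
  have [E _] := step_ee sl.
  by move: (side_s x0c Ex0); rewrite -E hl eqxx.
- have allns : forall y, y \in cyc -> y.1 != inl (inl s).
    by move=> y yc; apply: contra nh => /eqP E; apply/hasP; exists y => //; rewrite E.
  have cls1 : forall y, y \in cyc -> sideV (exitv C y) ->
      exists2 a, y.1 = inl (inl a) & [/\ a \in es D',
        fsrc C (inl (inl a)) = omap (fun v => inl (inl v)) (fsrc D' a) &
        ftgt C (inl (inl a)) = omap (fun v => inl (inl v)) (ftgt D' a)].
    move=> y yc; case: (cyc_cls yc) => [[a Ea [aE _ Es Et]]|[b Eb [_ Es Et]]|[Ey _ _]].
    + by move=> _; exists a => //; rewrite -Ea.
    + by rewrite /exitv Es Et; case: (y.2); rewrite sideLR.
    + by have := allns y yc; rewrite Ey eqxx.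
  have cls2 : forall y, y \in cyc -> ~~ sideV (exitv C y) ->
      exists2 b, y.1 = inl (inr b) & [/\ b \in es D'',
        fsrc C (inl (inr b)) = omap (fun v => inl (inr v)) (fsrc D'' b) &
        ftgt C (inl (inr b)) = omap (fun v => inl (inr v)) (ftgt D'' b)].
    move=> y yc; case: (cyc_cls yc) => [[a Ea [aE _ Es Et]]|[b Eb [bE Es Et]]|[Ey _ _]].
    + have [hs ht] := cyc_ends cc yc; move: hs ht; rewrite /exitv Es Et.
      case: (fsrc D' a) => // ? _; case: (ftgt D' a) => // ? _; by case: (y.2).
    + by move=> _; exists b => //; rewrite -Eb.
    + by have := allns y yc; rewrite Ey eqxx.
  case Ec: cyc => [|x0 rest]; first by move: cc; rewrite Ec; case/and4P.
  have x0c : x0 \in cyc by rewrite Ec inE eqxx.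
  have pth : path (step C) x0 rest.
    by move: cc; rewrite Ec => /and4P[_ _ _]; rewrite /cycle rcons_path => /andP[].
  have al : all (fun y => (y \in cyc) && (y.1 != inl (inl s))) rest.
    apply/allP => y yr; have yc : y \in cyc by rewrite Ec inE yr orbT.
    by rewrite yc allns.
  have sp := side_path pth al.
  have sides : forall y, y \in cyc -> sideV (exitv C y) = sideV (exitv C x0).
    move=> y; rewrite Ec inE => /orP[/eqP -> //|yr].
    by move/allP: sp => /(_ _ yr) /eqP.
  case: (boolP (sideV (exitv C x0))) => hx0.
  + have := cf' (map (fun y => (if y.1 is inl (inl a) then a else s, y.2)) cyc).
    move/negP; apply; apply: (proj_cycle (g := fun v : fV D' => inl (inl v) : fV C)
                                (h := fun a : fE D' => inl (inl a) : fE C)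
       (un := fun z : fE C => if z is inl (inl a) then a else s) (cyc := cyc)) => //.
    * by move=> ? ? [].
    * by move=> ? ? [].
    * by move=> y yc; apply: cls1 => //; rewrite sides.
  + have := cf'' (map (fun y => (if y.1 is inl (inr a) then a else u'' e2, y.2)) cyc).
    move/negP; apply; apply: (proj_cycle (g := fun v : fV D'' => inl (inr v) : fV C)
                                (h := fun a : fE D'' => inl (inr a) : fE C)
       (un := fun z : fE C => if z is inl (inr a) then a else u'' e2) (cyc := cyc)) => //.
    * by move=> ? ? [].
    * by move=> ? ? [].
    * by move=> y yc; apply: cls2 => //; rewrite sides.
Qed.

End Cyc.

Lemma cfC : cycle_free C.
Proof. by move=> cyc; apply/negP => cc; exact: (cyc_false cc). Qed.

Lemma glue_ok : [/\ is_flow C, cycle_free C &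
  @Inv B C (fun e => inr (inl e)) (fun e => inr (inr e))].
Proof.
split; [exact: flowC | exact: cfC | split].
- by move=> ? ? _ _ [].
- by move=> e eU; rewrite upC mem_imset // => ? ? [].
- by move=> x; rewrite upC => /imsetP[e eU ->]; exists e.
- by move=> ? ? _ _ [].
- by move=> e eL; rewrite loC mem_imset // => ? ? [].
- by move=> x; rewrite loC => /imsetP[e eL ->]; exists e.
- exact: polC.
Qed.

End Glue.


Unset Implicit Arguments. Unset Strict Implicit. Unset Printing Implicit Defensive.

Lemma main n : forall B, #|es B| < n -> is_flow B ->
  (forall cyc, ai_cycle B cyc -> fragile_cycle B cyc) ->
  exists C (u l : fE B -> fE C), [/\ bc B C u l, is_flow C, cycle_free C & @Inv B C u l].
Proof.
elim: n => [|n IH] B; first by move=> H; rewrite ltn0 in H.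
move=> sz HB Hf.
case: (classic (exists cyc, fragile_cycle B cyc)) => [[cyc fc]|nf]; last first.
  exists B, id, id; split => //.
  - apply: bc_base => cyc; apply/negP => fc; apply: nf; by exists cyc.
  - move=> cyc; apply/negP => cc; apply: nf; exists cyc; exact: Hf.
  - split => //.
    + by move=> x; exists x.
    + by move=> x; exists x.
    + by move=> p pok; exists p.
have /andP[cc /hasP[x xc se]] := fc.
have Hcyc : exists cyc, ai_cycle B cyc && (x.1 \in map fst cyc).
  by exists cyc; rewrite cc map_f.
move: se Hcyc; rewrite /simple_edge; set e1 := x.1 => /andP[e1E].
case s1: (fsrc B e1) => [i|] //; case t1: (ftgt B e1) => [c|] // /andP[/eqP ki /eqP kc] Hcyc.
have HB' := HB; case: HB' => H1 H2 _ _.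
have [iV cV] : i \in vs B /\ c \in vs B by have := H1 _ e1E; rewrite s1 t1.
have [e2 [n21 e2E s2]] : exists e2, [/\ e2 != e1, e2 \in es B & fsrc B e2 = Some i].
  have [_ h2] := H2 i iV; rewrite ki in h2.
  have : #|[set e in es B | fsrc B e == Some i] :\ e1| == 1.
    by move: h2; rewrite (cardsD1 e1 [set e in es B | _]) !inE e1E s1 eqxx add1n => -[->].
  case/cards1P => e2 He2.
  have : e2 \in [set e in es B | fsrc B e == Some i] :\ e1 by rewrite He2 set11.
  by rewrite !inE => /and3P[n21 e2E /eqP s2]; exists e2.
have [e3 [n31 e3E t3]] : exists e3, [/\ e3 != e1, e3 \in es B & ftgt B e3 = Some c].
  have [h1 _] := H2 c cV; rewrite kc in h1.
  have : #|[set e in es B | ftgt B e == Some c] :\ e1| == 1.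
    by move: h1; rewrite (cardsD1 e1 [set e in es B | _]) !inE e1E t1 eqxx add1n => -[->].
  case/cards1P => e3 He3.
  have : e3 \in [set e in es B | ftgt B e == Some c] :\ e1 by rewrite He3 set11.
  by rewrite !inE => /and3P[n31 e3E /eqP t3]; exists e3.
have szB : #|es B| <= n by rewrite -ltnS.
have [D' [u' [l' [bc' fD' cf' iv']]]] :=
  IH (flowB' B i c e1 e3) (leq_trans (sizeB' B i c e1 e3 e1E) szB)
     (flowB'_ok B i c e1 e3 HB e1E s1 t1 ki kc e3E n31 t3)
     (fragB' B i c e1 e2 e3 HB e1E s1 ki e2E n21 s2 Hf).
have [D'' [u'' [l'' [bc'' fD'' cf'' iv'']]]] :=
  IH (flowB'' B i c e1 e2) (leq_trans (sizeB'' B i c e1 e2 e1E) szB)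
     (flowB''_ok B i c e1 e2 HB e1E s1 t1 ki kc e2E n21 s2)
     (fragB'' B i c e1 e2 e3 HB e1E t1 kc e3E n31 t3 Hf).
case: iv' => ui' uu' us' li' ll' ls' p'.
case: iv'' => ui'' uu'' us'' li'' ll'' ls'' p''.
move: ui' uu' us' li' ll' ls' p' ui'' uu'' us'' li'' ll'' ls'' p''.
rewrite (upB' B i c e1 e3 s1) (loB' B i c e1 e3 t1 e3E n31).
rewrite (upB'' B i c e1 e2 s1 e2E n21) (loB'' B i c e1 e2 t1).
move=> ui' uu' us' li' ll' ls' p' ui'' uu'' us'' li'' ll'' ls'' p''.
have pol1 : forall p, polarity_ok B p -> exists q, [/\ polarity_ok D' q,
     {in upper_edges B, forall e, q (u' e) = p e} &
     {in e3 |: lower_edges B, forall e, q (l' e) = p e}].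
  by move=> p pok; apply: p'; apply: polB'.
have pol2 : forall p, polarity_ok B p -> exists q, [/\ polarity_ok D'' q,
     {in e2 |: upper_edges B, forall e, q (u'' e) = p e} &
     {in lower_edges B, forall e, q (l'' e) = p e}].
  by move=> p pok; apply: p''; apply: polB''.
have [fC cfC ivC] := glue_ok HB e1E s1 t1 ki kc e2E n21 s2 e3E n31 t3 fD' fD'' cf' cf''
  ui' uu' us' li' ll' ls' ui'' uu'' us'' li'' ll'' ls'' pol1 pol2.
exists (glue B e2 e3 D' D'' u' l' u'' l''), (fun e => inr (inl e)), (fun e => inr (inr e)).
split => //.
exact: (bc_step B i c e1 e2 e3 D' D'' u' l' u'' l'' e1E s1 t1 ki kc e2E n21 s2
          e3E n31 t3 Hcyc bc' bc'').
Qed.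

Theorem theorem5p9 (B : flow) :
  is_flow B ->
  (forall cyc, ai_cycle B cyc -> fragile_cycle B cyc) ->
  exists (C : flow) (u l : fE B -> fE C),
    bc B C u l /\ is_flow C /\ cycle_free C.
Proof.
move=> HB Hf; have [C [u [l [h1 h2 h3 _]]]] := main #|es B|.+1 B (ltnSn _) HB Hf.
by exists C, u, l.
Qed.
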